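(* Let $n\ge 1$, $\pi\in S_n$ and $1\le i\le n+1$. If one deletes the entry $1$ from $s_{1\dot{2}}(\mathrm{ins}_i(\pi))$ and then subtracts $1$ from every remaining entry, the result is exactly $s_{1\dot{2}}(\pi)$. Equivalently, the entries $2,3,\dots,n+1$ appear in $s_{1\dot{2}}(\mathrm{ins}_i(\pi))$ in the same relative order as the entries $1,2,\dots,n$ appear in $s_{1\dot{2}}(\pi)$, with $x$ corresponding to $x-1$.
   Context: The $1\dot{2}$-avoiding stack-sorting map $s_{1\dot{2}}$ is defined as follows. Start with the input $\pi$ and an empty stack. Repeat the following step until both the input and the stack are empty: - If input remains, and either the stack is empty or the next input entry is smaller than the entry at the bottom of the stack, push the next input entry onto the top of the stack. - Otherwise, pop the top entry of the stack and append it to the output. The output word is $s_{1\dot{2}}(\pi)$. For $\pi\in S_n$, $\mathrm{inc}(\pi)$ is the word obtained by adding $1$ to every entry of $\pi$. For $1\le i\le n+1$, $\mathrm{ins}_i(\pi)\in S_{n+1}$ is the permutation obtained from $\mathrm{inc}(\pi)$ by inserting the entry $1$ so that it occupies position $i$. *)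

(* Defs.v *)
From mathcomp Require Import all_boot.
Set Implicit Arguments. Unset Strict Implicit. Unset Printing Implicit Defensive.

(* Words/permutations are sequences of naturals; pi in S_n is a seq nat that
   is a permutation of [:: 1; ...; n].
   The stack is a seq whose head is the TOP and whose last element is the
   BOTTOM. One fuel unit per step (push or pop). *)
Fixpoint s12_aux (fuel : nat) (inp stk : seq nat) : seq nat :=
  match fuel with
  | 0 => [::]
  | f.+1 =>
    match inp, stk with
    | [::], [::] => [::]
    | x :: inp', [::] => s12_aux f inp' [:: x]
    | x :: inp', y :: stk' =>
        if x < last y stk' then s12_aux f inp' (x :: stk)
        else y :: s12_aux f inp stk'
    | [::], y :: stk' => y :: s12_aux f [::] stk'
    end
  end.

(* Each entry is pushed once and popped once: 2 * size steps suffice. *)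
Definition s12 (pi : seq nat) : seq nat := s12_aux (2 * size pi) pi [::].

Definition inc (pi : seq nat) : seq nat := map S pi.

Definition ins (i : nat) (pi : seq nat) : seq nat :=
  take i.-1 (inc pi) ++ 1 :: drop i.-1 (inc pi).

(* Main.v *)
Require Import Defs.
From mathcomp Require Import all_boot.
From mathcomp Require Import zify.

Definition gg (s : seq nat) := map predn (filter (fun x => x != 1) s).
Definition S12 I S := s12_aux (2 * size I + size S) I S.

Lemma fuelE f I S : 2 * size I + size S <= f -> s12_aux f I S = S12 I S.
Proof.
elim: f I S => [|f IH] I S.
  by case: I => [|x I]; case: S => [|y S] //= ; lia.
case: I => [|x I]; case: S => [|y S] H.
- by [].
- have E : 2 * size ([::] : seq nat) + size (y :: S) = (2 * size ([::] : seq nat) + size S).+1 by simpl; lia.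
  rewrite /S12 E /= IH //=; lia.
- have E : 2 * size (x :: I) + size ([::] : seq nat) = (2 * size I + size [:: x]).+1 by simpl; lia.
  rewrite /S12 E /= IH //=; simpl in H; lia.
- simpl in H.
  have E : 2 * size (x :: I) + size (y :: S) = (2 * size (x::I) + size S).+1 by simpl; lia.
  have E2 : 2 * size (x :: I) + size S = (2 * size I + size (x :: y :: S)) by simpl; lia.
  rewrite /S12 E /=; case: ifP => _.
    rewrite IH; last by simpl; lia.
    by rewrite /S12 -E2.
  rewrite IH //=; lia.
Qed.

Lemma S12_nil : S12 [::] [::] = [::].
Proof. by []. Qed.
Lemma S12_pop y s : S12 [::] (y :: s) = y :: S12 [::] s.
Proof.
rewrite {1}/S12 (_ : 2 * size ([::] : seq nat) + size (y :: s) = (size s).+1) /=; last lia.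
by rewrite fuelE //=; lia.
Qed.
Lemma S12_push0 x I : S12 (x :: I) [::] = S12 I [:: x].
Proof.
rewrite {1}/S12 (_ : 2 * size (x :: I) + size ([::] : seq nat) = (2 * size I + 1).+1) /=; last lia.
by rewrite fuelE //=; lia.
Qed.
Lemma S12_step x I y s : S12 (x :: I) (y :: s) =
  if x < last y s then S12 I (x :: y :: s) else y :: S12 (x :: I) s.
Proof.
rewrite {1}/S12 (_ : 2 * size (x :: I) + size (y :: s) = (2 * size I + (size s).+2).+1) /=; last lia.
by case: ifP => _; rewrite fuelE //=; lia.
Qed.

Arguments S12 : simpl never.
Arguments gg : simpl never.

Lemma gg_nil : gg [::] = [::]. Proof. by []. Qed.
Lemma gg_cons x l : gg (x :: l) = if x == 1 then gg l else x.-1 :: gg l.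
Proof. by rewrite /gg /=; case: (x == 1). Qed.

Definition Sinv (S : seq nat) := if S is y :: s then (last y s == 1) ==> (s == [::]) else true.

Lemma Sinv_tail y s : Sinv (y :: s) -> Sinv s.
Proof. case: s => //= z t /implyP H; apply/implyP => /H. done. Qed.

Lemma lastg y s : last y s != 1 ->
  exists z t, gg (y :: s) = z :: t /\ last z t = (last y s).-1.
Proof.
move=> H; rewrite lastI /gg filter_rcons H map_rcons.
case: (map _ _) => [|z t]; first by exists (last y s).-1, [::].
by exists z, (rcons t (last y s).-1); rewrite rcons_cons last_rcons.
Qed.

Ltac cl0 := repeat match goal with H : is_true (_ <= _) |- _ => move: H end;
  repeat (case: (_ == _)); rewrite /= ?add0n ?addn0 ?addnS ?addSn => *; lia.
Ltac cl := first [lia | cl0].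

Lemma sim k I S : 2 * size I + size S <= k -> all (fun x => 0 < x) I ->
  all (fun x => 0 < x) S -> count_mem 1 I + count_mem 1 S <= 1 -> Sinv S ->
  gg (S12 I S) = S12 (gg I) (gg S).
Proof.
elim: k I S => [|k IH] [|x I] [|y s] /= Hm PI PS C Sv;
  rewrite ?gg_nil ?S12_nil //; try lia.
-
  move/andP: PS => [Py PS].
  rewrite S12_pop !gg_cons; case: eqP => Hy.
    by rewrite IH //=; by [cl | exact: Sinv_tail Sv].
  by rewrite S12_pop IH //=; by [cl | exact: Sinv_tail Sv].
-
  move/andP: PI => [Px PI].
  rewrite S12_push0 IH //=; try by [cl | rewrite Px | case: (_ == _)].
  rewrite !gg_cons gg_nil; case: eqP => Hx; first by [].
  by rewrite S12_push0.
- move/andP: PI => [Px PI]; move/andP: PS => [Py PS].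
  rewrite S12_step.
  have [Hb|Hb] := eqVneq (last y s) 1.
  + move: Sv; rewrite /= Hb /= => /eqP Es; subst s; simpl in Hb; subst y.
    rewrite ltnNge Px /= gg_cons eqxx IH //=; try by cl.
  + have [z [t [Eg Ezt]]] := lastg y s Hb.
    have Pb : 1 < last y s.
      have PA : all (fun x => 0 < x) (y :: s) by rewrite /= Py PS.
      have := allP PA _ (mem_last y s).
      move: Hb; case: (last y s) => [|[|b]] //=.
    rewrite Eg gg_cons; case: eqP => Hx.
    * subst x; rewrite Pb IH //=; try by [cl | rewrite ?Py ?PS | rewrite (negbTE Hb)].
      by rewrite gg_cons eqxx Eg.
    * rewrite S12_step Ezt.
      have -> : (x.-1 < (last y s).-1) = (x < last y s).
        by apply/idP/idP; move: Px Pb; lia.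
      case: ifP => Hxb.
      - rewrite IH //=; try by [cl | rewrite ?Py ?PS | rewrite (negbTE Hb)].
        by rewrite gg_cons Eg; case: eqP.
      - case: (eqVneq y 1) => Hy.
        + subst y; case: s Hb Eg Ezt Hxb Hm PS C Sv Pb => [//|y' s'] /= Hb Eg Ezt Hxb Hm PS C Sv Pb.
          rewrite gg_cons eqxx S12_step /= Hxb.
          move/andP: PS => [Py' PS].
          have Hy' : y' != 1 by apply/negP => /eqP Ey'; subst y'; move: C; rewrite eqxx; cl.
          rewrite !gg_cons eqxx (negbTE Hy') in Eg; case: Eg => <- <-.
          rewrite gg_cons (negbTE Hy') IH //=; try by [cl | rewrite ?Px ?PI |
            case: s' Hb {Ezt Hxb Sv Pb Hm C PS} => //= a l /negbTE ->].
          by rewrite gg_cons; case: eqP.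
        + rewrite gg_cons (negbTE Hy) IH //=; try by [cl | rewrite ?Px ?PI | exact: Sinv_tail Sv].
          move: Eg; rewrite [gg (y :: s)]gg_cons (negbTE Hy) => -[<- <-].
          by rewrite gg_cons; case: eqP.
Qed.

Lemma s12E p : s12 p = S12 p [::].
Proof. by rewrite /s12 /S12 addn0. Qed.

Theorem lemma3p3 (n : nat) (pi : seq nat) (i : nat) :
  1 <= n -> perm_eq pi (iota 1 n) -> 1 <= i <= n.+1 ->
  map predn (filter (fun x => x != 1) (s12 (ins i pi))) = s12 pi.
Proof.
move=> _ Hp _.
have P : perm_eq (ins i pi) (1 :: inc pi).
  by rewrite /ins -cat1s perm_catCA cat_take_drop.
have Hg : gg (ins i pi) = pi.
  rewrite /gg /ins filter_cat /= -filter_cat cat_take_drop /inc.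
  rewrite (eq_in_filter (a2 := predT)); last first.
    move=> _ /mapP [x Hx ->] /=; apply/negP => /eqP [] Ex; subst x.
    by move: Hx; rewrite (perm_mem Hp) mem_iota.
  by rewrite filter_predT -map_comp map_id.
rewrite s12E -/(gg _) (@sim (2 * size (ins i pi) + 0)) //.
- by rewrite Hg gg_nil s12E.
- by rewrite (perm_all _ P) /= /inc; apply/allP => _ /mapP [x _ ->].
- rewrite addn0 (permP P) /= /inc.
  rewrite (_ : count_mem 1 (map S pi) = 0) //.
  have : 0 \notin pi by rewrite (perm_mem Hp) mem_iota.
  elim: (pi) => //= a l IH; rewrite inE negb_or => /andP [Ha /IH ->]; rewrite addn0; by case: a Ha.
Qed.
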